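(* Neither the complex tame Butcher group $\mathcal B^{\mathbb C}_{TM}$ nor the tame Butcher group $\mathcal B_{TM}$ is locally exponential, i.e. for neither group does the Lie group exponential map restrict to a diffeomorphism from an open $0$-neighbourhood in the Lie algebra onto an open $e$-neighbourhood. More precisely, for every $\varepsilon\in\mathbb R\setminus\{0\}$ the element $a_\varepsilon\in\mathcal B_{TM}$ is not in the image of $\exp_{\mathcal B_{TM}}$, while $\mathbb R\to\mathcal B_{TM}$, $\varepsilon\mapsto a_\varepsilon$ ($a_0:=e$) is a continuous curve through $e$; hence the image of $\exp_{\mathcal B_{TM}}$ contains no identity neighbourhood.
   Context: $\mathcal T_0$ is the set of rooted trees plus the empty tree $\emptyset$; $\bullet$ is the one-vertex tree; $|\tau|$ the number of vertices. $\mathcal B^{\mathbb C}_{TM}$ is the complex tame Butcher group: maps $a\colon\mathcal T_0\to\mathbb C$ with $a(\emptyset)=1$ and $|a(\tau)|\le CK^{|\tau|}$ for some $C,K>0$, with product $(a\cdot b)(\tau)=\sum_{s\in\mathrm{OST}(\tau)}b(s_\tau)\prod_{\theta\in\tau\setminus s}a(\theta)$ (sum over ordered subtrees) and unit $e$ ($e(\emptyset)=1$, else 0); $\mathcal B_{TM}$ its real-valued subgroup. They are analytic Lie groups modelled on the Silva spaces $M^*_{\mathbb K}=\{a\in\bigcup_k\mathbb K^{\mathcal T_0}(\omega_k)\mid a(\emptyset)=0\}$ (inductive limit of the Banach spaces $\mathbb K^{\mathcal T_0}(\omega_k)=\{a\mid\sup_\tau|a(\tau)|2^{-k|\tau|}<\infty\}$)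 with global chart $a\mapsto a-e$. The Lie group exponential $\exp\colon\mathbf L(G)\to G$ is the map such that $t\mapsto\exp(tx)$ is a one-parameter group with derivative $x$ at $0$. For $\varepsilon\in\mathbb R\setminus\{0\}$, $a_\varepsilon(\emptyset)=1$, $a_\varepsilon(\bullet)=\varepsilon$ and $a_\varepsilon(\tau)=0$ for all other trees $\tau$. *)

(* Defs.v *)
From Stdlib Require Import Reals List Permutation.
Open Scope R_scope.

(* Planar rooted trees; non-planar rooted trees are their isomorphism classes
   (see [tree_iso]).  The empty tree is [None : option tree]. *)
Inductive tree : Type := Node : list tree -> tree.

Fixpoint tsize (t : tree) : nat :=
  match t with Node ts => S (list_sum (map tsize ts)) end.

Definition osize (t : option tree) : nat :=
  match t with None => 0%nat | Some t => tsize t end.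

Inductive tree_iso : tree -> tree -> Prop :=
| iso_node : forall ts us us',
    Permutation us us' -> Forall2 tree_iso ts us' -> tree_iso (Node ts) (Node us).

Record Scal := mkScal {
  K :> Type; K0 : K; K1 : K;
  Kadd : K -> K -> K; Kmul : K -> K -> K; Kopp : K -> K;
  Kabs : K -> R; KofR : R -> K }.

Definition Rsc : Scal := mkScal R 0 1 Rplus Rmult Ropp Rabs (fun r => r).

Definition Cx := (R * R)%type.
Definition Cadd (z w : Cx) : Cx := (fst z + fst w, snd z + snd w).
Definition Cmul (z w : Cx) : Cx :=
  (fst z * fst w - snd z * snd w, fst z * snd w + snd z * fst w).
Definition Copp (z : Cx) : Cx := (- fst z, - snd z).
Definition Cabs (z : Cx) : R := sqrt (fst z * fst z + snd z * snd z).
Definition Csc : Scal := mkScal Cx (0,0) (1,0) Cadd Cmul Copp Cabs (fun r => (r,0)).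

Section TreeMaps.
Variable F : Scal.

Definition tmap := option tree -> K F.

(* maps on T_0 = maps on non-planar trees *)
Definition invariant (a : tmap) : Prop :=
  forall t u, tree_iso t u -> a (Some t) = a (Some u).

Definition Ksum (l : list (K F)) : K F := fold_right (Kadd F) (K0 F) l.
Definition Kprod (l : list (K F)) : K F := fold_right (Kmul F) (K1 F) l.

(** Ordered subtrees.  [ost_ne t] lists, for every subtree s of t containing the
    root, the pair (s, forest t \ s). *)
Fixpoint combos (l : list (list (option tree * list tree))) : list (list tree * list tree) :=
  match l with
  | nil => (nil, nil) :: nil
  | o :: os =>
      flat_map (fun p =>
        map (fun q => (match fst p with Some s => s :: fst q | None => fst q end,
                       snd p ++ snd q)) (combos os)) o
  end.

Fixpoint ost_ne (t : tree) : list (tree * list tree) :=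
  match t with
  | Node ts =>
      map (fun q => (Node (fst q), snd q))
        (combos (map (fun ti => (None, ti :: nil) ::
                    map (fun p => (Some (fst p), snd p)) (ost_ne ti)) ts))
  end.

Definition ost (t : tree) : list (option tree * list tree) :=
  (None, t :: nil) :: map (fun p => (Some (fst p), snd p)) (ost_ne t).

Definition bmul (a b : tmap) : tmap := fun tau =>
  match tau with
  | None => b None
  | Some t => Ksum (map (fun p => Kmul F (b (fst p)) (Kprod (map (fun th => a (Some th)) (snd p)))) (ost t))
  end.

Definition unit_e : tmap := fun tau => match tau with None => K1 F | Some _ => K0 F end.

Definition tame (a : tmap) : Prop :=
  exists C Kc, 0 < C /\ 0 < Kc /\ forall tau, Kabs F (a tau) <= C * Kc ^ (osize tau).

Definition inG (a : tmap) : Prop := a None = K1 F /\ invariant a /\ tame a.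

Definition fsub (f g : tmap) : tmap := fun tau => Kadd F (f tau) (Kopp F (g tau)).
Definition fscale (r : R) (f : tmap) : tmap := fun tau => Kmul F (KofR F r) (f tau).
Definition fzero : tmap := fun _ => K0 F.

(* the Banach step K^{T_0}(omega_k), restricted to a(empty)=0 *)
Definition inE (k : nat) (f : tmap) : Prop :=
  f None = K0 F /\ invariant f /\
  exists C, forall tau, Kabs F (f tau) <= C * 2 ^ (k * osize tau).

Definition inM (f : tmap) : Prop := exists k, inE k f.

(* open sets of the inductive limit topology: U meets every step in an open set *)
Definition openM (U : tmap -> Prop) : Prop :=
  forall k a, inE k a -> U a ->
    exists r, 0 < r /\ forall b, inE k b ->
      (forall tau, Kabs F (fsub b a tau) <= r * 2 ^ (k * osize tau)) -> U b.


Definition lim0 (f : R -> tmap) (L : tmap) : Prop :=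
  forall U, openM U -> U L ->
    exists d, 0 < d /\ forall h, h <> 0 -> Rabs h < d -> U (f h).

Definition cont_at (c : R -> tmap) (t : R) : Prop :=
  forall U, openM U -> U (c t) ->
    exists d, 0 < d /\ forall s, Rabs (s - t) < d -> U (c s).

Definition is_deriv (c c' : R -> tmap) : Prop :=
  forall t, lim0 (fun h => fscale (/ h) (fsub (c (t + h)) (c t))) (c' t).

Definition smooth_curve (c : R -> tmap) : Prop :=
  exists (D : nat -> R -> tmap),
    (forall t, D 0%nat t = c t) /\
    (forall n t, inM (D n t)) /\
    (forall n t, cont_at (D n) t) /\
    (forall n, is_deriv (D n) (D (S n))).

(* smooth one-parameter group R -> G (G modelled on M*_K via the chart a |-> a - e) *)
Definition one_param (g : R -> tmap) : Prop :=
  (forall t, inG (g t)) /\ g 0 = unit_e /\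
  (forall s t, g (s + t) = bmul (g s) (g t)) /\
  smooth_curve (fun t => fsub (g t) unit_e).

(* a lies in the image of the Lie group exponential: a = exp(x), where
   t |-> exp(tx) is the one-parameter group with derivative x at 0 *)
Definition in_exp_image (a : tmap) : Prop :=
  exists x, inM x /\ exists g, one_param g /\
    lim0 (fun h => fscale (/ h) (fsub (g h) (g 0))) x /\ g 1 = a.

Definition exp_image_contains_id_nbhd : Prop :=
  exists V, openM V /\ V fzero /\
    forall a, inG a -> V (fsub a unit_e) -> in_exp_image a.

Definition a_eps (eps : R) : tmap := fun tau =>
  match tau with
  | None => K1 F
  | Some (Node nil) => KofR F eps
  | Some _ => K0 F
  end.

End TreeMaps.

(* Main.v *)
Require Import Defs.
From Stdlib Require Import Reals Lra Lia List Permutation Ring FunctionalExtensionality.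
From Stdlib Require Import Factorial.
From Coquelicot Require Import Coquelicot.
Open Scope R_scope.

Record Good (F : Scal) : Type := {
  pr1 : K F -> R; pr2 : K F -> R;
  g_addA : forall a b c, Kadd F a (Kadd F b c) = Kadd F (Kadd F a b) c;
  g_addC : forall a b, Kadd F a b = Kadd F b a;
  g_add0 : forall a, Kadd F (K0 F) a = a;
  g_addN : forall a, Kadd F a (Kopp F a) = K0 F;
  g_mulA : forall a b c, Kmul F a (Kmul F b c) = Kmul F (Kmul F a b) c;
  g_mulC : forall a b, Kmul F a b = Kmul F b a;
  g_mul1 : forall a, Kmul F (K1 F) a = a;
  g_mulD : forall a b c, Kmul F (Kadd F a b) c = Kadd F (Kmul F a c) (Kmul F b c);
  g_ofR_add : forall r s, KofR F (r + s) = Kadd F (KofR F r) (KofR F s);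
  g_ofR_mul : forall r s, KofR F (r * s) = Kmul F (KofR F r) (KofR F s);
  g_ofR1 : KofR F 1 = K1 F;
  g_ofR0 : KofR F 0 = K0 F;
  g_abs_tri : forall a b, Kabs F (Kadd F a b) <= Kabs F a + Kabs F b;
  g_abs_mul : forall a b, Kabs F (Kmul F a b) = Kabs F a * Kabs F b;
  g_abs_ofR : forall r, Kabs F (KofR F r) = Rabs r;
  g_abs_opp : forall a, Kabs F (Kopp F a) = Kabs F a;
  g_abs_pos : forall a, 0 <= Kabs F a;
  g_pr1_add : forall a b, pr1 (Kadd F a b) = pr1 a + pr1 b;
  g_pr2_add : forall a b, pr2 (Kadd F a b) = pr2 a + pr2 b;
  g_pr1_sc : forall r a, pr1 (Kmul F (KofR F r) a) = r * pr1 a;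
  g_pr2_sc : forall r a, pr2 (Kmul F (KofR F r) a) = r * pr2 a;
  g_pr1_le : forall a, Rabs (pr1 a) <= Kabs F a;
  g_pr2_le : forall a, Rabs (pr2 a) <= Kabs F a;
  g_pr1_ofR : forall r, pr1 (KofR F r) = r;
  g_pr_sep : forall a b, pr1 a = pr1 b -> pr2 a = pr2 b -> a = b
}.

Section Gen.
Variable F : Scal.
Variable G : Good F.

Local Notation "a +k b" := (Kadd F a b) (at level 50, left associativity).
Local Notation "a *k b" := (Kmul F a b) (at level 40, left associativity).
Local Notation "-k a" := (Kopp F a) (at level 35).
Local Notation k0 := (K0 F).
Local Notation k1 := (K1 F).
Local Notation ofR := (KofR F).
Local Notation kabs := (Kabs F).

Lemma Kring : ring_theory k0 k1 (Kadd F) (Kmul F) (fun a b => a +k -k b) (Kopp F) eq.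
Proof. constructor; intros; try reflexivity.
  apply (g_add0 _ G). apply (g_addC _ G). apply (g_addA _ G). apply (g_mul1 _ G).
  apply (g_mulC _ G). apply (g_mulA _ G). apply (g_mulD _ G). apply (g_addN _ G). Qed.
Add Ring KR : Kring.

Lemma ofR_opp r : ofR (- r) = -k ofR r.
Proof.
  assert (H : ofR (- r) +k ofR r = k0) by (rewrite <- (g_ofR_add _ G), <- (g_ofR0 _ G); f_equal; ring).
  transitivity (ofR (-r) +k ofR r +k -k ofR r); [ring|]. rewrite H. ring.
Qed.

Lemma pr1_opp a : pr1 _ G (-k a) = - pr1 _ G a.
Proof.
  replace (-k a) with (ofR (- (1)) *k a).
  - rewrite (g_pr1_sc _ G). ring.
  - rewrite ofR_opp, (g_ofR1 _ G). ring.
Qed.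
Lemma pr2_opp a : pr2 _ G (-k a) = - pr2 _ G a.
Proof.
  replace (-k a) with (ofR (- (1)) *k a).
  - rewrite (g_pr2_sc _ G). ring.
  - rewrite ofR_opp, (g_ofR1 _ G). ring.
Qed.

Lemma kabs0 : kabs k0 = 0.
Proof. rewrite <- (g_ofR0 _ G), (g_abs_ofR _ G). apply Rabs_R0. Qed.

Lemma kabs_sub_tri a b c : kabs (a +k -k c) <= kabs (a +k -k b) + kabs (b +k -k c).
Proof.
  replace (a +k -k c) with ((a +k -k b) +k (b +k -k c)) by ring. apply (g_abs_tri _ G).
Qed.

Definition Klim (f : R -> K F) (l : K F) : Prop :=
  forall e, 0 < e -> exists d, 0 < d /\ forall h, h <> 0 -> Rabs h < d -> kabs (f h +k -k l) < e.

Definition Kder (f : R -> K F) (t : R) (l : K F) : Prop :=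
  Klim (fun h => ofR (/ h) *k (f (t + h) +k -k f t)) l.

Lemma Klim_ext f g l : (forall h, h <> 0 -> f h = g h) -> Klim f l -> Klim g l.
Proof.
  intros E H e He. destruct (H e He) as (d & Hd & Hh). exists d; split; auto.
  intros h H1 H2. rewrite <- E by auto. auto.
Qed.

Lemma Klim_eq f l l' : l = l' -> Klim f l -> Klim f l'.
Proof. intros ->; auto. Qed.

Lemma Klim_const c : Klim (fun _ => c) c.
Proof. intros e He. exists 1; split; [lra|]. intros. replace (c +k -k c) with k0 by ring. rewrite kabs0. lra. Qed.

Lemma Klim_plus f g a b : Klim f a -> Klim g b -> Klim (fun h => f h +k g h) (a +k b).
Proof.
  intros Hf Hg e He. destruct (Hf (e/2)) as (d1 & Hd1 & H1); [lra|].
  destruct (Hg (e/2)) as (d2 & Hd2 & H2); [lra|].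
  exists (Rmin d1 d2); split; [apply Rmin_case; lra|]. intros h Hh Hd.
  assert (Rabs h < d1) by (eapply Rlt_le_trans; [exact Hd|apply Rmin_l]).
  assert (Rabs h < d2) by (eapply Rlt_le_trans; [exact Hd|apply Rmin_r]).
  specialize (H1 h Hh ltac:(auto)). specialize (H2 h Hh ltac:(auto)).
  replace (f h +k g h +k -k (a +k b)) with ((f h +k -k a) +k (g h +k -k b)) by ring.
  eapply Rle_lt_trans; [apply (g_abs_tri _ G)|lra].
Qed.

Lemma Klim_cmul c f a : Klim f a -> Klim (fun h => c *k f h) (c *k a).
Proof.
  intros Hf e He. destruct (Hf (e / (kabs c + 1))) as (d & Hd & H).
  { pose proof (g_abs_pos _ G c). apply Rdiv_lt_0_compat; lra. }
  exists d; split; auto. intros h H1 H2. specialize (H h H1 H2).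
  replace (c *k f h +k -k (c *k a)) with (c *k (f h +k -k a)) by ring.
  rewrite (g_abs_mul _ G). pose proof (g_abs_pos _ G c). pose proof (g_abs_pos _ G (f h +k -k a)).
  apply Rle_lt_trans with ((kabs c + 1) * kabs (f h +k -k a)); [nra|].
  replace e with ((kabs c + 1) * (e / (kabs c + 1))) by (field; lra).
  apply Rmult_lt_compat_l; lra.
Qed.

Fixpoint KsumN (n : nat) (f : nat -> K F) : K F :=
  match n with O => f O | S m => KsumN m f +k f (S m) end.

Lemma KsumN_ext n f g : (forall j, (j <= n)%nat -> f j = g j) -> KsumN n f = KsumN n g.
Proof.
  induction n; intro H; simpl. apply H; lia.
  rewrite IHn by (intros; apply H; lia). rewrite H by lia. reflexivity.
Qed.

Lemma KsumN_plus n f g : KsumN n (fun j => f j +k g j) = KsumN n f +k KsumN n g.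
Proof. induction n; simpl; auto. rewrite IHn. ring. Qed.

Lemma KsumN_shift n f : KsumN (S n) f = f O +k KsumN n (fun j => f (S j)).
Proof. induction n. simpl. ring. change (KsumN (S (S n)) f) with (KsumN (S n) f +k f (S (S n))).
  rewrite IHn. simpl. ring. Qed.

Lemma KsumN_cmul n c f : KsumN n (fun j => c *k f j) = c *k KsumN n f.
Proof. induction n; simpl; auto. rewrite IHn. ring. Qed.

Lemma KsumN_zero n : KsumN n (fun _ => k0) = k0.
Proof. induction n; simpl; auto. rewrite IHn. ring. Qed.

Lemma KsumN_ofR n f : KsumN n (fun j => ofR (f j)) = ofR (sum_f_R0 f n).
Proof. induction n; simpl; auto. rewrite IHn, (g_ofR_add _ G). auto. Qed.

Lemma Klim_sum n (f : nat -> R -> K F) (l : nat -> K F) :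
  (forall j, (j <= n)%nat -> Klim (f j) (l j)) -> Klim (fun h => KsumN n (fun j => f j h)) (KsumN n l).
Proof.
  induction n; intro H; simpl. apply H; lia.
  apply Klim_plus. apply IHn; intros; apply H; lia. apply H; lia.
Qed.

Lemma Kder_sum n (f : nat -> R -> K F) (l : nat -> K F) t :
  (forall j, (j <= n)%nat -> Kder (f j) t (l j)) -> Kder (fun s => KsumN n (fun j => f j s)) t (KsumN n l).
Proof.
  intro H. unfold Kder. eapply Klim_ext; [|apply Klim_sum; exact H].
  intros h Hh. cbv beta. clear H. induction n; simpl; auto. rewrite IHn. ring.
Qed.

Lemma Kder_cmul c f t l : Kder f t l -> Kder (fun s => c *k f s) t (c *k l).
Proof.
  intro H. unfold Kder. eapply Klim_ext; [|apply (Klim_cmul c); exact H].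
  intros h Hh. cbv beta. ring.
Qed.

Lemma Kder_ofR (p : R -> R) t v : derivable_pt_lim p t v -> Kder (fun s => ofR (p s)) t (ofR v).
Proof.
  intros H e He. destruct (H e He) as [d Hd]. exists d; split; [apply cond_pos|].
  intros h H1 H2. specialize (Hd h H1 H2).
  rewrite <- ofR_opp, <- (g_ofR_add _ G), <- (g_ofR_mul _ G), <- ofR_opp, <- (g_ofR_add _ G), (g_abs_ofR _ G).
  replace (/ h * (p (t + h) + - p t) + - v) with ((p (t + h) - p t) / h - v) by (field; auto). exact Hd.
Qed.

Lemma zero_der_const (u : R -> R) : (forall t, derivable_pt_lim u t 0) -> forall t, u t = u 0.
Proof.
  intro H. pose (pr := fun x => exist (fun l => derivable_pt_lim u x l) 0 (H x) : derivable_pt u x).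
  assert (C : constant u).
  { apply (null_derivative_1 u pr). intro x. reflexivity. }
  intro t. apply C.
Qed.

Lemma Kder_unique f q (D : R -> K F) :
  (forall t, Kder f t (D t)) -> (forall t, Kder q t (D t)) -> f 0 = q 0 -> forall t, f t = q t.
Proof.
  intros Hf Hq H0.
  assert (Hp : forall (pr : K F -> R),
    (forall a b, pr (a +k b) = pr a + pr b) -> (forall r a, pr (ofR r *k a) = r * pr a) ->
    (forall a, Rabs (pr a) <= kabs a) -> (forall a, pr (-k a) = - pr a) ->
    forall t, pr (f t) - pr (q t) = pr (f 0) - pr (q 0)).
  { intros pr Hadd Hsc Hle Hopp.
    apply (zero_der_const (fun t => pr (f t) - pr (q t))). intros t e He.
    destruct (Hf t (e/2)) as (d1 & Hd1 & H1); [lra|].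
    destruct (Hq t (e/2)) as (d2 & Hd2 & H2); [lra|].
    assert (Hdp : 0 < Rmin d1 d2) by (apply Rmin_case; lra).
    exists (mkposreal _ Hdp). intros h Hh Hd. simpl in Hd.
    assert (Rabs h < d1) by (eapply Rlt_le_trans; [exact Hd|apply Rmin_l]).
    assert (Rabs h < d2) by (eapply Rlt_le_trans; [exact Hd|apply Rmin_r]).
    specialize (H1 h Hh ltac:(auto)). specialize (H2 h Hh ltac:(auto)).
    pose proof (Hle (ofR (/ h) *k (f (t + h) +k -k f t) +k -k D t)) as L1.
    pose proof (Hle (ofR (/ h) *k (q (t + h) +k -k q t) +k -k D t)) as L2.
    rewrite !Hadd, !Hopp, Hsc, Hadd, Hopp in L1. rewrite !Hadd, !Hopp, Hsc, Hadd, Hopp in L2.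
    replace ((pr (f (t + h)) - pr (q (t + h)) - (pr (f t) - pr (q t))) / h - 0) with
      ((/ h * (pr (f (t + h)) + - pr (f t)) + - pr (D t)) - (/ h * (pr (q (t + h)) + - pr (q t)) + - pr (D t)))
      by (field; auto).
    eapply Rle_lt_trans; [apply Rabs_triang|]. rewrite Rabs_Ropp.
    lra. }
  intro t. apply (g_pr_sep _ G).
  - pose proof (Hp (pr1 _ G) (g_pr1_add _ G) (g_pr1_sc _ G) (g_pr1_le _ G) pr1_opp t). rewrite H0 in H. lra.
  - pose proof (Hp (pr2 _ G) (g_pr2_add _ G) (g_pr2_sc _ G) (g_pr2_le _ G) pr2_opp t). rewrite H0 in H. lra.
Qed.

End Gen.

Fixpoint binom (n k : nat) : nat :=
  match n, k with
  | _, O => 1%nat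
  | O, S _ => 0%nat
  | S n', S k' => (binom n' k' + binom n' (S k'))%nat
  end.

Lemma binom_gt : forall n k, (n < k)%nat -> binom n k = 0%nat.
Proof.
  induction n; intros k H; destruct k; simpl; try lia; auto.
  rewrite !IHn; lia.
Qed.

Lemma binom_nn : forall n, binom n n = 1%nat.
Proof. induction n; simpl; auto. rewrite IHn, binom_gt; lia. Qed.

Lemma binom_fact : forall n k, (k <= n)%nat ->
  (binom n k * fact k * fact (n - k) = fact n)%nat.
Proof.
  induction n; intros k H.
  - destruct k; simpl; lia.
  - destruct k.
    + simpl. lia.
    + simpl binom. replace (S n - S k)%nat with (n - k)%nat by lia.
      destruct (Nat.eq_dec k n) as [->|Hne].
      * rewrite binom_nn, binom_gt by lia. rewrite Nat.sub_diag. simpl. lia.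
      * assert (Hk : (S k <= n)%nat) by lia.
        pose proof (IHn k ltac:(lia)) as H1.
        pose proof (IHn (S k) Hk) as H2.
        replace (n - k)%nat with (S (n - S k)) by lia.
        change (fact (S k)) with (S k * fact k)%nat.
        change (fact (S (n - S k))) with (S (n - S k) * fact (n - S k))%nat.
        change (fact (S n)) with (S n * fact n)%nat.
        replace (n - k)%nat with (S (n - S k)) in H1 by lia.
        change (fact (S (n - S k))) with (S (n - S k) * fact (n - S k))%nat in H1.
        change (fact (S k)) with (S k * fact k)%nat in H2.
        nia.
Qed.

Lemma INR_fact_pos : forall n, 0 < INR (fact n).
Proof. intro n. apply lt_0_INR, lt_O_fact. Qed.

Lemma binom_R : forall n k, (k <= n)%nat ->
  INR (binom n k) = INR (fact n) / (INR (fact k) * INR (fact (n - k))).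
Proof.
  intros n k H. rewrite <- (binom_fact n k H), !mult_INR.
  pose proof (INR_fact_pos k). pose proof (INR_fact_pos (n-k)). field; lra.
Qed.

Lemma binom_succ_mul : forall n k, (k <= n)%nat ->
  (binom (S n) k * (S n - k) = S n * binom n k)%nat.
Proof.
  intros n k H.
  pose proof (binom_fact (S n) k ltac:(lia)) as H1.
  pose proof (binom_fact n k H) as H2.
  replace (S n - k)%nat with (S (n - k)) in * by lia.
  change (fact (S (n-k))) with (S (n-k) * fact (n-k))%nat in H1.
  change (fact (S n)) with (S n * fact n)%nat in H1.
  assert (Hp : (0 < fact k * fact (n-k))%nat).
  { pose proof (lt_O_fact k); pose proof (lt_O_fact (n-k)); nia. }
  apply (Nat.mul_cancel_r _ _ (fact k * fact (n-k))); [lia|].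
  nia.
Qed.

(* recurrence of the bushy-tree coefficients *)
Lemma rec2 (z : nat -> R) : z 0%nat = 1 ->
  (forall n, (1 <= n)%nat -> sum_f_R0 (fun j => INR (binom n j) * z j / INR (n - j + 1)) n = 0) ->
  forall n, sum_f_R0 (fun k => INR (binom n k) * z k) n = z n + (if Nat.eqb n 1 then 1 else 0).
Proof.
  intros H0 Hr n. destruct n as [|N].
  - simpl. lra.
  - rewrite tech5, binom_nn. simpl INR at 2.
    assert (E : sum_f_R0 (fun k => INR (binom (S N) k) * z k) N =
                INR (S N) * sum_f_R0 (fun j => INR (binom N j) * z j / INR (N - j + 1)) N).
    { rewrite scal_sum. apply sum_eq. intros i Hi.
      pose proof (binom_succ_mul N i Hi) as Hb.
      apply (f_equal INR) in Hb. rewrite !mult_INR in Hb.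
      replace (S N - i)%nat with (N - i + 1)%nat in Hb by lia.
      assert (0 < INR (N - i + 1)) by (apply lt_0_INR; lia).
      replace (INR (binom (S N) i)) with (INR (S N) * INR (binom N i) / INR (N - i + 1))
        by (rewrite <- Hb; field; lra).
      field. lra. }
    rewrite E. destruct N as [|N'].
    + simpl. rewrite H0. lra.
    + rewrite Hr by lia. simpl Nat.eqb. lra.
Qed.

Fixpoint csn (k : nat) : R * R :=
  match k with O => (1, 0) | S k => (- snd (csn k), fst (csn k)) end.
Definition cc k := fst (csn k).
Definition ss k := snd (csn k).

Lemma cs_add : forall k m, ss (k + m) = cc k * ss m + ss k * cc m /\
                           cc (k + m) = cc k * cc m - ss k * ss m.
Proof.
  induction k; intro m; unfold cc, ss in *; simpl.
  - split; ring.
  - destruct (IHk m) as [A B]. rewrite A, B. split; ring.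
Qed.

Lemma cs_par : forall n, cc (2*n) = (-1)^n /\ ss (2*n) = 0 /\ cc (2*n+1) = 0 /\ ss (2*n+1) = (-1)^n.
Proof.
  induction n.
  - unfold cc, ss; simpl. repeat split; ring.
  - destruct IHn as (A & B & C & D).
    replace (2 * S n + 1)%nat with (S (S (2*n+1))) by lia.
    replace (2 * S n)%nat with (S (2*n+1)) by lia.
    unfold cc, ss in *; cbn [csn fst snd]. rewrite C, D. repeat split; simpl; ring.
Qed.

Lemma cs_bound : forall k, Rabs (cc k) <= 1 /\ Rabs (ss k) <= 1.
Proof.
  induction k; unfold cc, ss in *; simpl.
  - rewrite Rabs_R1, Rabs_R0; lra.
  - rewrite Rabs_Ropp. tauto.
Qed.

Lemma series_cos (x : R) : is_series (fun n => cc n / INR (fact n) * x ^ n) (cos x).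
Proof.
  apply is_pseries_R.
  replace (cos x) with (cos x + x * 0) by ring.
  apply is_pseries_odd_even.
  - apply is_pseries_R.
    assert (Hc : cos_in (Rsqr x) (cos x)).
    { unfold cos. destruct (exist_cos (Rsqr x)). exact c. }
    apply is_series_Reals in Hc. revert Hc. apply is_series_ext. intro n.
    destruct (cs_par n) as (A & _). rewrite A. unfold cos_n, Rsqr. replace (x^2) with (x*x) by ring. reflexivity.
  - apply is_pseries_R.
    apply is_series_ext with (a := fun _ => 0).
    + intro n. destruct (cs_par n) as (_ & _ & C & _). rewrite C. unfold Rdiv. rewrite !Rmult_0_l. reflexivity.
    + apply is_series_Reals. intros e He. exists 0%nat. intros. unfold R_dist.
      rewrite sum_cte. rewrite Rmult_0_l, Rminus_0_r, Rabs_R0. lra.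
Qed.

Lemma series_sin (x : R) : is_series (fun n => ss n / INR (fact n) * x ^ n) (sin x).
Proof.
  apply is_pseries_R.
  unfold sin. destruct (exist_sin (Rsqr x)) as [l Hl].
  replace (x * l) with (0 + x * l) by ring.
  apply is_pseries_odd_even.
  - apply is_pseries_R.
    apply is_series_ext with (a := fun _ => 0).
    + intro n. destruct (cs_par n) as (_ & B & _ & _). rewrite B. unfold Rdiv. rewrite !Rmult_0_l. reflexivity.
    + apply is_series_Reals. intros e He. exists 0%nat. intros. unfold R_dist.
      rewrite sum_cte. rewrite Rmult_0_l, Rminus_0_r, Rabs_R0. lra.
  - apply is_pseries_R.
    apply is_series_Reals in Hl. revert Hl. apply is_series_ext. intro n.
    destruct (cs_par n) as (_ & _ & _ & D). rewrite D. unfold sin_n, Rsqr. replace (x^2) with (x*x) by ring. reflexivity.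
Qed.

Lemma ex_exp_bound (B y : R) : ex_series (fun k => B * (y ^ k / INR (fact k))).
Proof.
  exists (B * exp y).
  pose proof (is_exp_Reals y) as H. apply is_pseries_R in H.
  apply (is_series_scal_l B) in H. revert H.
  apply is_series_ext. intro n. change scal with Rmult. simpl. unfold Rdiv. ring.
Qed.

Lemma ex_abs_terms (u z : nat -> R) (A M th : R) :
  (forall k, Rabs (u k) <= 1) -> (forall n, Rabs (z n) <= A * M ^ n) ->
  ex_series (fun k => Rabs (u k * z k / INR (fact k) * th ^ k)).
Proof.
  intros Hu Hz.
  apply (@ex_series_le R_AbsRing R_CompleteNormedModule _ (fun k => Rabs A * ((Rabs M * Rabs th) ^ k / INR (fact k)))).
  2: apply ex_exp_bound.
  intro n. change (norm (Rabs (u n * z n / INR (fact n) * th ^ n))) with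
     (Rabs (Rabs (u n * z n / INR (fact n) * th ^ n))).
  rewrite Rabs_Rabsolu.
  pose proof (INR_fact_pos n).
  rewrite !Rabs_mult, Rabs_div by lra. rewrite (Rabs_right (INR (fact n))) by lra.
  rewrite <- !RPow_abs, Rpow_mult_distr.
  assert (Hz' : Rabs (z n) <= Rabs A * Rabs M ^ n).
  { rewrite RPow_abs, <- Rabs_mult. eapply Rle_trans; [apply Hz|apply Rle_abs]. }
  pose proof (Hu n). pose proof (Rabs_pos (u n)). pose proof (Rabs_pos (z n)).
  pose proof (pow_le (Rabs th) n (Rabs_pos th)).
  assert (Rabs (u n) * Rabs (z n) <= 1 * (Rabs A * Rabs M ^ n)).
  { apply Rmult_le_compat; lra. }
  apply Rle_trans with (1 * (Rabs A * Rabs M ^ n) / INR (fact n) * Rabs th ^ n).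
  - rewrite Rabs_mult. apply Rmult_le_compat_r; [lra|]. unfold Rdiv. apply Rmult_le_compat_r; [left; apply Rinv_0_lt_compat; lra|lra].
  - right. field. lra.
Qed.

Lemma delta_series (th : R) : is_series (fun n => if Nat.eqb n 1 then th else 0) th.
Proof.
  apply is_series_Reals. intros e He. exists 1%nat. intros n Hn. unfold R_dist.
  destruct n as [|n]; [lia|].
  match goal with |- context [sum_f_R0 ?f (S n)] => replace (sum_f_R0 f (S n)) with th end.
  { unfold Rminus. rewrite Rplus_opp_r, Rabs_R0. lra. }
  clear Hn. induction n.
  - simpl. ring.
  - rewrite tech5, <- IHn by lia. simpl. destruct n; simpl; ring.
Qed.

Lemma bern_unbounded (z : nat -> R) : z 0%nat = 1 ->
  (forall n, (1 <= n)%nat -> sum_f_R0 (fun j => INR (binom n j) * z j / INR (n - j + 1)) n = 0) ->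
  forall A M, (forall n, Rabs (z n) <= A * M ^ n) -> False.
Proof.
  intros H0 Hr A M Hz.
  pose proof (rec2 z H0 Hr) as H2.
  set (th := 2 * PI).
  set (pa := fun k => cc k * z k / INR (fact k) * th ^ k).
  set (pb := fun k => ss k * z k / INR (fact k) * th ^ k).
  set (ps := fun m => ss m / INR (fact m) * th ^ m).
  set (pc := fun m => cc m / INR (fact m) * th ^ m).
  assert (Aa : ex_series (fun k => Rabs (pa k))).
  { apply (ex_abs_terms cc z A M th); auto. intro k; apply cs_bound. }
  assert (Ab : ex_series (fun k => Rabs (pb k))).
  { apply (ex_abs_terms ss z A M th); auto. intro k; apply cs_bound. }
  assert (As : ex_series (fun k => Rabs (ps k))).
  { apply (ex_series_ext (fun k => Rabs (ss k * (fun _ => 1) k / INR (fact k) * th ^ k))).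
    - intro; unfold ps; cbv beta; rewrite Rmult_1_r; reflexivity.
    - apply (ex_abs_terms ss (fun _ => 1) 1 1 th). intro k; apply cs_bound.
      intro; rewrite pow1, Rabs_R1; lra. }
  assert (Ac : ex_series (fun k => Rabs (pc k))).
  { apply (ex_series_ext (fun k => Rabs (cc k * (fun _ => 1) k / INR (fact k) * th ^ k))).
    - intro; unfold pc; cbv beta; rewrite Rmult_1_r; reflexivity.
    - apply (ex_abs_terms cc (fun _ => 1) 1 1 th). intro k; apply cs_bound.
      intro; rewrite pow1, Rabs_R1; lra. }
  assert (Sa : is_series pa (Series pa)).
  { apply Series_correct. apply ex_series_Rabs. exact Aa. }
  assert (Sb : is_series pb (Series pb)).
  { apply Series_correct. apply ex_series_Rabs. exact Ab. }
  assert (Ss : is_series ps (sin th)) by apply series_sin.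
  assert (Sc : is_series pc (cos th)) by apply series_cos.
  pose proof (is_series_mult pa ps _ _ Sa Ss Aa As) as M1.
  pose proof (is_series_mult pb pc _ _ Sb Sc Ab Ac) as M2.
  pose proof (is_series_plus _ _ _ _ M1 M2) as M3.
  pose proof (is_series_plus _ _ _ _ Sb (delta_series th)) as M4.
  assert (Heq : forall n, plus (sum_f_R0 (fun k => pa k * ps (n - k)%nat) n)
                               (sum_f_R0 (fun k => pb k * pc (n - k)%nat) n)
                 = plus (pb n) (if Nat.eqb n 1 then th else 0)).
  { intro n. change plus with Rplus. simpl. rewrite <- sum_plus.
    transitivity (sum_f_R0 (fun k => (INR (binom n k) * z k) * (ss n / INR (fact n) * th ^ n)) n).
    - apply sum_eq. intros k Hk. unfold pa, ps, pb, pc.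
      destruct (cs_add k (n - k)) as [E1 _].
      replace (k + (n - k))%nat with n in E1 by lia.
      rewrite E1, binom_R by lia.
      replace (th ^ n) with (th ^ k * th ^ (n - k)) by (rewrite <- pow_add; f_equal; lia).
      pose proof (INR_fact_pos n). pose proof (INR_fact_pos k). pose proof (INR_fact_pos (n-k)).
      field. lra.
    - rewrite <- scal_sum. rewrite Rmult_comm, H2. unfold pb.
      destruct (Nat.eqb_spec n 1) as [->|Hn].
      + unfold ss; simpl. field.
      + pose proof (INR_fact_pos n). field. lra. }
  apply (is_series_ext _ _ _ Heq) in M3.
  apply is_series_unique in M3. apply is_series_unique in M4.
  assert (E : Series pa * sin th + Series pb * cos th = Series pb + th).
  { etransitivity; [symmetry; exact M3|exact M4]. }
  clear M3 M4. rename E into M3.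
  unfold th in M3. rewrite sin_2PI, cos_2PI in M3.
  pose proof PI_RGT_0. lra.
Qed.

Definition bul : tree := Node nil.
Definition Bt (n : nat) : tree := Node (repeat bul n).
Definition oo : list (option tree * list tree) := (None, bul :: nil) :: (Some bul, nil) :: nil.

Lemma ost_ne_B n : ost_ne (Bt n) = map (fun q => (Node (fst q), snd q)) (combos (repeat oo n)).
Proof.
  unfold Bt. cbn [ost_ne]. f_equal. f_equal. induction n; simpl; [reflexivity|].
  rewrite IHn. reflexivity.
Qed.

Lemma tsize_B n : tsize (Bt n) = S n.
Proof. unfold Bt; simpl. f_equal. induction n; simpl; auto. Qed.

Section Gen2.
Variable F : Scal.
Variable G : Good F.

Local Notation "a +k b" := (Kadd F a b) (at level 50, left associativity).
Local Notation "a *k b" := (Kmul F a b) (at level 40, left associativity).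
Local Notation "-k a" := (Kopp F a) (at level 35).
Local Notation k0 := (K0 F).
Local Notation k1 := (K1 F).
Local Notation ofR := (KofR F).
Local Notation kabs := (Kabs F).
Add Ring KR2 : (Kring F G).

Fixpoint Kpow (w : K F) (m : nat) : K F := match m with O => k1 | S m => w *k Kpow w m end.

Lemma Kpow_ofR r m : Kpow (ofR r) m = ofR (r ^ m).
Proof. induction m; simpl. symmetry; apply (g_ofR1 _ G). rewrite IHm, (g_ofR_mul _ G). auto. Qed.

Lemma Kprod_repeat (f : tree -> K F) m : Kprod F (map f (repeat bul m)) = Kpow (f bul) m.
Proof. induction m; simpl; auto. rewrite IHm. auto. Qed.

Lemma Ksum_cons x l : Ksum F (x :: l) = x +k Ksum F l.
Proof. reflexivity. Qed.
Lemma Kprod_cons x l : Kprod F (x :: l) = x *k Kprod F l.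
Proof. reflexivity. Qed.

Lemma Ksum_app l1 l2 : Ksum F (l1 ++ l2) = Ksum F l1 +k Ksum F l2.
Proof. induction l1; simpl. ring. rewrite IHl1. ring. Qed.

Lemma ofR_nat_add a b : ofR (INR (a + b)) = ofR (INR a) +k ofR (INR b).
Proof. rewrite plus_INR. apply (g_ofR_add _ G). Qed.

Lemma KsumN_S n f : KsumN F (S n) f = KsumN F n f +k f (S n).
Proof. reflexivity. Qed.

Lemma pascal (n : nat) (phi : nat -> nat -> K F) :
  KsumN F (S n) (fun j => ofR (INR (binom (S n) j)) *k phi j (S n - j)%nat) =
  KsumN F n (fun j => ofR (INR (binom n j)) *k phi j (S (n - j))) +k
  KsumN F n (fun j => ofR (INR (binom n j)) *k phi (S j) (n - j)%nat).
Proof.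
  rewrite (KsumN_shift F G).
  rewrite (KsumN_ext F n _ (fun j => ofR (INR (binom n j)) *k phi (S j) (n - j)%nat +k
                                      ofR (INR (binom n (S j))) *k phi (S j) (n - j)%nat)).
  2:{ intros j Hj. simpl binom. rewrite ofR_nat_add. simpl Nat.sub. ring. }
  rewrite (KsumN_plus F G).
  assert (E : KsumN F n (fun j => ofR (INR (binom n j)) *k phi j (S (n - j))) =
              KsumN F (S n) (fun j => ofR (INR (binom n j)) *k phi j (S n - j)%nat)).
  { rewrite KsumN_S. rewrite (binom_gt n (S n)) by lia. simpl INR. rewrite (g_ofR0 _ G).
    rewrite (KsumN_ext F n _ (fun j => ofR (INR (binom n j)) *k phi j (S n - j)%nat)).
    ring. intros j Hj. f_equal. f_equal. lia. }
  rewrite E, (KsumN_shift F G). simpl binom. simpl Nat.sub. replace (binom n 0) with 1%nat by (destruct n; reflexivity). ring.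
Qed.

Lemma combos_sum n (Psi : list tree -> list tree -> K F) :
  Ksum F (map (fun q => Psi (fst q) (snd q)) (combos (repeat oo n))) =
  KsumN F n (fun j => ofR (INR (binom n j)) *k Psi (repeat bul j) (repeat bul (n - j))).
Proof.
  revert Psi. induction n; intro Psi.
  - simpl. rewrite (g_ofR1 _ G). ring.
  - change (combos (repeat oo (S n))) with (combos (oo :: repeat oo n)).
    cbn [combos flat_map oo fst snd]. rewrite app_nil_r, map_app, Ksum_app, !map_map.
    cbn [fst snd app].
    rewrite (IHn (fun A B => Psi A (bul :: B))), (IHn (fun A B => Psi (bul :: A) B)).
    rewrite (pascal n (fun j m => Psi (repeat bul j) (repeat bul m))). reflexivity.
Qed.

Lemma bmul_B (a b : tmap F) n :
  bmul F a b (Some (Bt n)) = (b None *k (a (Some (Bt n)) *k k1)) +k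
    KsumN F n (fun j => ofR (INR (binom n j)) *k (b (Some (Bt j)) *k Kpow (a (Some bul)) (n - j))).
Proof.
  unfold bmul, ost. cbn [map Ksum fst snd Kprod]. rewrite ost_ne_B, !map_map.
  cbn [fst snd].
  rewrite Ksum_cons, Kprod_cons. cbn [Kprod fold_right].   rewrite (combos_sum n (fun A B => b (Some (Node A)) *k Kprod F (map (fun th => a (Some th)) B))).
  f_equal. apply KsumN_ext. intros j _. rewrite (Kprod_repeat (fun th => a (Some th))). reflexivity.
Qed.

End Gen2.

Section Gen3.
Variable F : Scal.
Variable G : Good F.

Local Notation "a +k b" := (Kadd F a b) (at level 50, left associativity).
Local Notation "a *k b" := (Kmul F a b) (at level 40, left associativity).
Local Notation "-k a" := (Kopp F a) (at level 35).
Local Notation k0 := (K0 F).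
Local Notation k1 := (K1 F).
Local Notation ofR := (KofR F).
Local Notation kabs := (Kabs F).
Add Ring KR3 : (Kring F G).

Lemma openU (tau0 : option tree) (L : tmap F) e :
  openM F (fun b => kabs (b tau0 +k -k L tau0) < e).
Proof.
  intros k a Hak Ua.
  set (m := 2 ^ (k * osize tau0)).
  assert (Hm : 0 < m) by (apply pow_lt; lra).
  set (c := kabs (a tau0 +k -k L tau0)) in *.
  exists ((e - c) / (2 * m)). split.
  - apply Rdiv_lt_0_compat; lra.
  - intros b _ Hb. specialize (Hb tau0). unfold fsub in Hb. fold m in Hb.
    eapply Rle_lt_trans; [apply (kabs_sub_tri F G _ (a tau0))|].
    replace ((e - c) / (2 * m) * m) with ((e - c) / 2) in Hb by (field; lra).
    fold c. lra.
Qed.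

Lemma der_g_pointwise (g : R -> tmap F) x :
  g 0 = unit_e F ->
  lim0 F (fun h => fscale F (/ h) (fsub F (g h) (g 0))) x ->
  forall tau, Klim F (fun h => ofR (/ h) *k g h (Some tau)) (x (Some tau)).
Proof.
  intros Hg0 Hl tau e He.
  destruct (Hl _ (openU (Some tau) x e)) as (d & Hd & H).
  { rewrite (g_addN _ G), (kabs0 F G). exact He. }
  exists d; split; auto. intros h H1 H2. specialize (H h H1 H2).
  unfold fscale, fsub in H. rewrite Hg0 in H. simpl in H.
  replace (ofR (/ h) *k g h (Some tau)) with (ofR (/ h) *k (g h (Some tau) +k -k k0)) by ring.
  exact H.
Qed.


Lemma a_eps_B (eps : R) n : a_eps F eps (Some (Bt (S n))) = k0.
Proof. reflexivity. Qed.

Lemma derB (g : R -> tmap F) x :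
  (forall t, inG F (g t)) ->
  (forall s t, g (s + t) = bmul F (g s) (g t)) ->
  (forall tau, Klim F (fun h => ofR (/ h) *k g h (Some tau)) (x (Some tau))) ->
  forall n t, Kder F (fun s => g s (Some (Bt n))) t
     (KsumN F n (fun j => ofR (INR (binom n j)) *k (x (Some (Bt j)) *k Kpow F (g t (Some bul)) (n - j)))).
Proof.
  intros HG Hlaw Hx n t. unfold Kder.
  apply (Klim_eq F) with (l := KsumN F n (fun j => (ofR (INR (binom n j)) *k Kpow F (g t (Some bul)) (n - j)) *k x (Some (Bt j)))).
  { apply (KsumN_ext F). intros; ring. }
  apply (Klim_ext F) with (f := fun h => KsumN F n (fun j => (ofR (INR (binom n j)) *k Kpow F (g t (Some bul)) (n - j)) *k (ofR (/ h) *k g h (Some (Bt j))))).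
  - intros h Hh. rewrite Hlaw, (bmul_B F G). destruct (HG h) as [HN _]. rewrite HN.
    transitivity (ofR (/ h) *k KsumN F n (fun j => ofR (INR (binom n j)) *k (g h (Some (Bt j)) *k Kpow F (g t (Some bul)) (n - j)))).
    + rewrite <- (KsumN_cmul F G). apply (KsumN_ext F). intros; ring.
    + ring.
  - apply (Klim_sum F G n (fun j h => (ofR (INR (binom n j)) *k Kpow F (g t (Some bul)) (n - j)) *k (ofR (/ h) *k g h (Some (Bt j))))
       (fun j => (ofR (INR (binom n j)) *k Kpow F (g t (Some bul)) (n - j)) *k x (Some (Bt j)))).
    intros j _. apply (Klim_cmul F G). apply Hx.
Qed.

Lemma deriv_poly (c : R) m t :
  derivable_pt_lim (fun s => c * s ^ (S m)) t (c * (INR (S m) * t ^ m)).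
Proof.
  apply derivable_pt_lim_scal.
  pose proof (derivable_pt_lim_pow t (S m)). simpl pred in H. exact H.
Qed.

Theorem not_in_exp (eps : R) : eps <> 0 -> ~ in_exp_image F (a_eps F eps).
Proof.
  intros He [x [[kx [Hx0 [Hxinv [Cx HCx]]]] [g [[HG [Hg0 [Hlaw _]]] [Hlim Hg1]]]]].
  pose proof (der_g_pointwise g x Hg0 Hlim) as Hx.
  pose proof (derB g x HG Hlaw Hx) as HD.
  assert (Hbul : forall t, g t (Some bul) = ofR t *k x (Some bul)).
  { apply (Kder_unique F G _ _ (fun _ => x (Some bul))).
    - intro t. eapply (Klim_eq F); [|apply (HD 0%nat t)]. simpl. change (Bt 0) with bul. rewrite (g_ofR1 _ G). ring.
    - intro t. unfold Kder.
      apply (Klim_ext F) with (f := fun h => x (Some bul) *k (ofR (/ h) *k (ofR (t + h) +k -k ofR t))).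
      { intros; ring. }
      apply (Klim_eq F) with (l := x (Some bul) *k ofR 1).
      { rewrite (g_ofR1 _ G). ring. }
      apply (Klim_cmul F G). exact (Kder_ofR F G (fun s => s) t 1 (derivable_pt_lim_id t)).
    - rewrite Hg0. simpl. rewrite (g_ofR0 _ G). ring. }
  assert (Hxb : x (Some bul) = ofR eps).
  { pose proof (Hbul 1) as H. rewrite Hg1 in H.
    change (a_eps F eps (Some bul)) with (ofR eps) in H. rewrite (g_ofR1 _ G) in H.
    rewrite H. ring. }
  assert (Hw : forall t, g t (Some bul) = ofR (t * eps)).
  { intro t. rewrite Hbul, Hxb, (g_ofR_mul _ G). reflexivity. }
  set (P := fun n t => KsumN F n (fun j => (ofR (INR (binom n j)) *k x (Some (Bt j))) *k
              ofR (eps ^ (n - j) / INR (S (n - j)) * t ^ (S (n - j))))).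
  assert (HP : forall n t, g t (Some (Bt n)) = P n t).
  { intro n.
    apply (Kder_unique F G _ _ (fun t => KsumN F n (fun j => ofR (INR (binom n j)) *k
             (x (Some (Bt j)) *k Kpow F (ofR (t * eps)) (n - j))))).
    - intro t. rewrite <- Hw. apply HD.
    - intro t. unfold P.
      eapply (Klim_eq F); [|apply (Kder_sum F G n
         (fun j s => (ofR (INR (binom n j)) *k x (Some (Bt j))) *k
                      ofR (eps ^ (n - j) / INR (S (n - j)) * s ^ (S (n - j))))
         (fun j => (ofR (INR (binom n j)) *k x (Some (Bt j))) *k
                      ofR (eps ^ (n - j) / INR (S (n - j)) * (INR (S (n - j)) * t ^ (n - j)))))].
      + apply (KsumN_ext F). intros j _. rewrite (Kpow_ofR F G).
        replace (eps ^ (n - j) / INR (S (n - j)) * (INR (S (n - j)) * t ^ (n - j)))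
          with ((t * eps) ^ (n - j)).
        * ring.
        * rewrite Rpow_mult_distr. assert (0 < INR (S (n - j))) by (apply lt_0_INR; lia).
          field. lra.
      + intros j _. apply (Kder_cmul F G).
        apply (Kder_ofR F G (fun s => eps ^ (n - j) / INR (S (n - j)) * s ^ (S (n - j)))).
        apply deriv_poly.
    - rewrite Hg0. unfold P. cbn [unit_e].
      rewrite (KsumN_ext F n _ (fun _ => k0)). symmetry; apply (KsumN_zero F G).
      intros j _. simpl pow. rewrite Rmult_0_l, Rmult_0_r, (g_ofR0 _ G). ring. }
  assert (HE : forall m, KsumN F (S m) (fun j => (ofR (INR (binom (S m) j)) *k x (Some (Bt j))) *k
              ofR (eps ^ (S m - j) / INR (S (S m - j)) * 1 ^ (S (S m - j)))) = k0).
  { intro m. pose proof (HP (S m) 1) as H. rewrite Hg1 in H. exact (eq_sym H). }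
  set (z := fun n => pr1 F G (x (Some (Bt n))) / eps ^ (S n)).
  assert (Hepsn : forall n, eps ^ n <> 0) by (intro; apply pow_nonzero; auto).
  assert (Hz : forall N n, (n <= N)%nat -> x (Some (Bt n)) = ofR (eps ^ (S n) * z n)).
  { induction N; intros n Hn.
    - assert (n = 0%nat) by lia. subst n. unfold z. change (Bt 0) with bul.
      rewrite Hxb, (g_pr1_ofR _ G). f_equal. field. simpl; lra.
    - destruct (Nat.le_gt_cases n N) as [Hle|Hlt]; [apply IHN; auto|].
      assert (n = S N) by lia. subst n.
      pose proof (HE N) as H. rewrite (KsumN_S F) in H.
      rewrite (KsumN_ext F N _ (fun j => ofR (INR (binom (S N) j) * (eps ^ (S j) * z j) *
              (eps ^ (S N - j) / INR (S (S N - j)) * 1 ^ (S (S N - j)))))) in H.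
      2:{ intros j Hj. rewrite (IHN j Hj), !(g_ofR_mul _ G). reflexivity. }
      rewrite (KsumN_ofR F G), binom_nn, Nat.sub_diag in H.
      replace (ofR (eps ^ 0 / INR (S 0) * 1 ^ S 0)) with k1 in H
        by (rewrite <- (g_ofR1 _ G); f_equal; simpl; field).
      set (r := sum_f_R0 _ N) in H.
      assert (Hx' : x (Some (Bt (S N))) = ofR (- r)).
      { rewrite (ofR_opp F G). simpl INR in H. rewrite (g_ofR1 _ G) in H.
        transitivity ((ofR r +k (k1 *k x (Some (Bt (S N)))) *k k1) +k -k ofR r); [ring|].
        rewrite H. ring. }
      rewrite Hx'. unfold z. rewrite Hx', (g_pr1_ofR _ G). f_equal. field. auto. }
  assert (Hz' : forall n, x (Some (Bt n)) = ofR (eps ^ (S n) * z n)) by (intro n; apply (Hz n); lia).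
  assert (Hrec : forall n, (1 <= n)%nat -> sum_f_R0 (fun j => INR (binom n j) * z j / INR (n - j + 1)) n = 0).
  { intros n Hn. destruct n as [|m]; [lia|].
    pose proof (HE m) as H.
    rewrite (KsumN_ext F (S m) _ (fun j => ofR (INR (binom (S m) j) * (eps ^ (S j) * z j) *
              (eps ^ (S m - j) / INR (S (S m - j)) * 1 ^ (S (S m - j)))))) in H.
    2:{ intros j Hj. rewrite Hz', !(g_ofR_mul _ G). reflexivity. }
    rewrite (KsumN_ofR F G) in H. apply (f_equal (pr1 F G)) in H.
    rewrite (g_pr1_ofR _ G), <- (g_ofR0 _ G), (g_pr1_ofR _ G) in H.
    rewrite (sum_eq _ (fun j => (INR (binom (S m) j) * z j / INR (S m - j + 1)) * eps ^ (S (S m)))) in H.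
    2:{ intros j Hj. rewrite pow1.
        replace (eps ^ S (S m)) with (eps ^ (S j) * eps ^ (S m - j)) by (rewrite <- pow_add; f_equal; lia).
        replace (INR (S (S m - j))) with (INR (S m - j + 1)) by (f_equal; lia).
        assert (0 < INR (S m - j + 1)) by (apply lt_0_INR; lia). field. lra. }
    rewrite <- scal_sum in H. apply Rmult_integral in H. destruct H as [H|H]; auto.
    exfalso; apply (Hepsn _ H). }
  pose (M := 2 ^ kx / Rabs eps).
  assert (Hea : 0 < Rabs eps) by (apply Rabs_pos_lt; auto).
  assert (Hz0 : z 0%nat = 1).
  { unfold z. change (Bt 0) with bul. rewrite Hxb, (g_pr1_ofR _ G). simpl. field. auto. }
  apply (bern_unbounded z Hz0 Hrec (Cx * M) M).
  intro n. pose proof (HCx (Some (Bt n))) as H.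
  change (osize (Some (Bt n))) with (tsize (Bt n)) in H. rewrite tsize_B, Hz', (g_abs_ofR _ G), Rabs_mult, <- RPow_abs, pow_mult in H.
  set (E := Rabs eps ^ S n) in H.
  assert (HE0 : 0 < E) by (apply pow_lt; auto).
  assert (HME : M ^ S n * E = (2 ^ kx) ^ S n).
  { unfold E. rewrite <- Rpow_mult_distr. f_equal. unfold M. field. lra. }
  apply (Rmult_le_reg_r E); auto.
  replace (Cx * M * M ^ n * E) with (Cx * (M ^ S n * E)) by (simpl; ring).
  rewrite HME. lra.
Qed.

End Gen3.

Definition GoodR : Good Rsc.
Proof.
  apply (@Build_Good Rsc (fun a => a) (fun _ => 0)); simpl; intros; try ring.
  - apply Rabs_triang.
  - apply Rabs_mult.
  - apply Rabs_Ropp.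
  - apply Rabs_pos.
  - apply Rle_refl.
  - rewrite Rabs_R0. apply Rabs_pos.
  - auto.
Defined.

Lemma sqrt_sq_abs r : sqrt (r * r + 0 * 0) = Rabs r.
Proof. replace (r * r + 0 * 0) with (Rsqr r) by (unfold Rsqr; ring). apply sqrt_Rsqr_abs. Qed.

Definition GoodC : Good Csc.
Proof.
  apply (@Build_Good Csc (fun a : Cx => fst a) (fun a : Cx => snd a)); simpl;
    unfold Cx, Cadd, Cmul, Copp, Cabs in *; simpl.
  all: try (intros; repeat match goal with p : (R * R)%type |- _ => destruct p end; simpl;
            f_equal; ring).
  - intros [a b] [c d]; simpl.
    set (u := sqrt (a * a + b * b)). set (v := sqrt (c * c + d * d)).
    assert (Hu : 0 <= u) by apply sqrt_pos. assert (Hv : 0 <= v) by apply sqrt_pos.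
    assert (Hu2 : u * u = a * a + b * b) by (apply sqrt_sqrt; nra).
    assert (Hv2 : v * v = c * c + d * d) by (apply sqrt_sqrt; nra).
    rewrite <- (sqrt_square (u + v)) by lra.
    apply sqrt_le_1_alt.
    assert (HCS : a * c + b * d <= u * v).
    { assert (Hsq : (a * c + b * d) * (a * c + b * d) <= (u * v) * (u * v)).
      { replace ((u * v) * (u * v)) with ((u * u) * (v * v)) by ring. rewrite Hu2, Hv2.
        pose proof (Rle_0_sqr (a * d - b * c)) as Hq. unfold Rsqr in Hq. nra. }
      assert (0 <= u * v) by nra.
      destruct (Rle_dec (a * c + b * d) (u * v)) as [?|Hn]; auto. exfalso.
      set (p := a * c + b * d) in *. set (q := u * v) in *.
      assert (q < p) by lra. assert (q * q < p * p) by nra. lra. }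
    nra.
  - intros [a b] [c d]; simpl.
    rewrite <- sqrt_mult by nra. f_equal. ring.
  - intro r. apply sqrt_sq_abs.
  - intros. apply sqrt_pos.
  - intros. ring.
  - intros. ring.
  - intros [a b]; simpl. rewrite <- sqrt_Rsqr_abs. apply sqrt_le_1_alt. unfold Rsqr. nra.
  - intros [a b]; simpl. rewrite <- sqrt_Rsqr_abs. apply sqrt_le_1_alt. unfold Rsqr. nra.
  - intros [a b] [c d]; simpl. intros -> ->. reflexivity.
Defined.

Lemma iso_nil t u : tree_iso t u -> (t = Node nil <-> u = Node nil).
Proof.
  intro H. inversion H as [ts us us' Hp Hf]; subst. split; intro E; injection E; intros ->.
  - inversion Hf; subst. apply Permutation_sym in Hp. apply Permutation_nil in Hp. subst. reflexivity.
  - apply Permutation_nil in Hp. subst us'. inversion Hf. reflexivity.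
Qed.

Definition aval (eps : R) (tau : option tree) : R :=
  match tau with Some (Node nil) => eps | _ => 0 end.

Lemma aval_inv eps t u : tree_iso t u -> aval eps (Some t) = aval eps (Some u).
Proof.
  intro H. pose proof (iso_nil t u H) as [A B].
  destruct t as [[|x ts]], u as [[|y us]]; simpl; auto.
  - discriminate (A eq_refl).
  - discriminate (B eq_refl).
Qed.

Section Gen4.
Variable F : Scal.
Variable G : Good F.
Add Ring KR4 : (Kring F G).

Lemma a_eps_inv eps : invariant F (a_eps F eps).
Proof.
  intros t u H. pose proof (iso_nil t u H) as [A B].
  destruct t as [[|x ts]], u as [[|y us]]; simpl; auto.
  - discriminate (A eq_refl).
  - discriminate (B eq_refl).
Qed.

Lemma Hdiff eps tau : fsub F (a_eps F eps) (unit_e F) tau = KofR F (aval eps tau).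
Proof.
  unfold fsub. destruct tau as [[[|x ts]]|]; simpl.
  - ring.
  - rewrite (g_ofR0 _ G). ring.
  - rewrite (g_ofR0 _ G). ring.
Qed.

Lemma aval_bound eps tau : Rabs (aval eps tau) <= Rabs eps.
Proof. destruct tau as [[[|x ts]]|]; simpl; try (rewrite Rabs_R0; apply Rabs_pos). lra. Qed.

Lemma inE_diff eps : inE F 0 (fsub F (a_eps F eps) (unit_e F)).
Proof.
  split; [|split].
  - rewrite Hdiff. simpl. apply (g_ofR0 _ G).
  - intros t u H. rewrite !Hdiff. f_equal. apply aval_inv; auto.
  - exists (Rabs eps). intro tau. rewrite Hdiff, (g_abs_ofR _ G). simpl. rewrite Rmult_1_r.
    apply aval_bound.
Qed.

Lemma inG_a eps : inG F (a_eps F eps).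
Proof.
  split; [reflexivity|split; [apply a_eps_inv|]].
  exists (Rabs eps + 1), 1. split; [pose proof (Rabs_pos eps); lra|split; [lra|]].
  intro tau. rewrite pow1, Rmult_1_r. pose proof (Rabs_pos eps).
  destruct tau as [[[|x ts]]|]; simpl.
  - rewrite (g_abs_ofR _ G). lra.
  - rewrite <- (g_ofR0 _ G), (g_abs_ofR _ G), Rabs_R0. lra.
  - rewrite <- (g_ofR1 _ G), (g_abs_ofR _ G), Rabs_R1. lra.
Qed.

Lemma no_nbhd : ~ exp_image_contains_id_nbhd F.
Proof.
  intros [V [HV [V0 Hall]]].
  assert (Hz : inE F 0 (fzero F)).
  { split; [reflexivity|split; [intros ? ? ?; reflexivity|]].
    exists 1. intro. unfold fzero. rewrite (kabs0 F G). simpl. lra. }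
  destruct (HV 0%nat (fzero F) Hz V0) as [r [Hr Hball]].
  apply (not_in_exp F G (r / 2)); [lra|].
  apply Hall; [apply inG_a|].
  apply Hball; [apply inE_diff|].
  intro tau. unfold fsub at 1. rewrite Hdiff. unfold fzero.
  replace (Kadd F (KofR F (aval (r / 2) tau)) (Kopp F (K0 F))) with (KofR F (aval (r / 2) tau)) by ring.
  rewrite (g_abs_ofR _ G). simpl. rewrite Rmult_1_r.
  eapply Rle_trans; [apply aval_bound|]. rewrite Rabs_right; lra.
Qed.

End Gen4.

Theorem proposition5p6 :
  ~ exp_image_contains_id_nbhd Csc /\
  ~ exp_image_contains_id_nbhd Rsc /\
  (forall eps : R, eps <> 0 ->
     inG Rsc (a_eps Rsc eps) /\ ~ in_exp_image Rsc (a_eps Rsc eps)) /\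
  a_eps Rsc 0 = unit_e Rsc /\
  (forall t : R, cont_at Rsc (fun eps => fsub Rsc (a_eps Rsc eps) (unit_e Rsc)) t).
Proof.
  split; [apply (no_nbhd Csc GoodC)|].
  split; [apply (no_nbhd Rsc GoodR)|].
  split; [intros eps He; split; [apply (inG_a Rsc GoodR)|apply (not_in_exp Rsc GoodR eps He)]|].
  split.
  { apply functional_extensionality. intros [[[|x ts]]|]; reflexivity. }
  intros t U HU Ut.
  destruct (HU 0%nat _ (inE_diff Rsc GoodR t) Ut) as [r [Hr Hball]].
  exists r. split; auto. intros s Hs.
  apply Hball; [apply (inE_diff Rsc GoodR s)|].
  intro tau. unfold fsub at 1. rewrite !(Hdiff Rsc GoodR). simpl. rewrite Rmult_1_r.
  destruct tau as [[[|x ts]]|]; simpl; try (rewrite Rplus_opp_r, Rabs_R0; lra).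
  fold (Rminus s t). lra.
Qed.
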